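(* In the $m$-type setting described in the context, suppose $x_i=x$ for all types $i$. Then diffusion occurs from a small seed if and only if $x>1$.
   Context: There are $m\ge1$ types. $\Pi=(\pi_{ij})$ is a nonnegative row-stochastic primitive $m\times m$ matrix ($\pi_{ij}$ is the probability that a meeting of a type-$i$ agent is with a type-$j$ agent). For each type $i$: $P_i$ is a degree distribution on the nonnegative integers; $w_i(d)>0$ are degree weights; $f_i(d,a)$, $g_i(d,a)$ ($0\le a\le d$) are adoption and abandonment rates satisfying: $f_i(d,0)=0$; $f_i(d,a)$ nondecreasing in $a$; $f_i(d,1)>0$ for some $d$ with $P_i(d)>0$; $g_i(d,0)>0$; $g_i(d,a)$ nonincreasing in $a$. Let $x_i=\sum_dP_i(d)w_i(d)\,d\,\frac{f_i(d,1)}{g_i(d,0)}$, assumed finite; it is positive. $A$ is the $m\times m$ matrix with $A_{ij}=\pi_{ij}x_j$. Diffusion occurs from a small seed means: for every $\varepsilon>0$ there exists $v\in\mathbb{R}^m$ with $0<v_i<\varepsilon$ and $(Av)_i>v_i$ for all $i$. *)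

(* Defs.v *)
From HB Require Import structures.
From mathcomp Require Import all_boot all_order all_algebra.
From mathcomp Require Import all_classical all_reals all_analysis.
Set Implicit Arguments. Unset Strict Implicit. Unset Printing Implicit Defensive.
Import Order.TTheory GRing.Theory Num.Theory.
Local Open Scope ring_scope.

Section Defs.
Variable R : realType.

Definition row_stochastic (m : nat) (Pi : 'M[R]_m) : Prop :=
  (forall i j, 0 <= Pi i j) /\ (forall i, \sum_j Pi i j = 1).

Definition mx_primitive (m : nat) (Pi : 'M[R]_m) : Prop :=
  (forall i j, 0 <= Pi i j) /\ exists k : nat, forall i j, 0 < (Pi ^+ k) i j.

Definition Amat (m : nat) (Pi : 'M[R]_m) (x : 'I_m -> R) : 'M[R]_m :=
  \matrix_(i, j) (Pi i j * x j).

Definition diffusion_small_seed (m : nat) (A : 'M[R]_m) : Prop :=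
  forall eps : R, 0 < eps ->
    exists v : 'cV[R]_m,
      forall i, 0 < v i 0 /\ v i 0 < eps /\ (A *m v) i 0 > v i 0.

Definition xterm (P w : nat -> R) (f g : nat -> nat -> R) (d : nat) : R :=
  P d * w d * d%:R * (f d 1%N / g d 0%N).

End Defs.

(* Main.v *)
Require Import Defs.
From HB Require Import structures.
From mathcomp Require Import all_boot all_order all_algebra.
From mathcomp Require Import all_classical all_reals all_analysis.
Import Order.TTheory GRing.Theory Num.Theory numFieldNormedType.Exports.
Local Open Scope classical_set_scope.
Local Open Scope ring_scope.

Theorem corollary4 (R : realType) (m : nat) (Pi : 'M[R]_m)
  (P w : 'I_m -> nat -> R) (f g : 'I_m -> nat -> nat -> R)
  (xs : 'I_m -> R) (x : R) :
  (0 < m)%N ->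
  row_stochastic Pi -> mx_primitive Pi ->
  (* P i is a probability distribution on the nonnegative integers *)
  (forall i d, 0 <= P i d) ->
  (forall i, (fun n => \sum_(d < n) P i d) @ \oo --> (1 : R)) ->
  (* positive degree weights *)
  (forall i d, 0 < w i d) ->
  (* adoption / abandonment rates (nonnegative) *)
  (forall i d a, (a <= d)%N -> 0 <= g i d a) ->
  (forall i d, f i d 0%N = 0) ->
  (forall i d a b, (a <= b)%N -> (b <= d)%N -> f i d a <= f i d b) ->
  (forall i, exists d, (1 <= d)%N /\ 0 < P i d /\ 0 < f i d 1%N) ->
  (forall i d, 0 < g i d 0%N) ->
  (forall i d a b, (a <= b)%N -> (b <= d)%N -> g i d b <= g i d a) ->
  (* x_i is the (finite) sum of the series *)
  (forall i, (fun n => \sum_(d < n) xterm (P i) (w i) (f i) (g i) d) @ \oo --> xs i) ->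
  (* all x_i are equal to x *)
  (forall i, xs i = x) ->
  diffusion_small_seed (Amat Pi xs) <-> 1 < x.
Proof.
move=> m0 [Pnn Psum] _ _ _ _ _ _ _ _ _ _ _ hx.
have Av : forall v : 'cV[R]_m, forall i, (Amat Pi xs *m v) i 0 = x * \sum_j Pi i j * v j 0.
  move=> v i; rewrite !mxE mulr_sumr; apply: eq_bigr => j _.
  by rewrite mxE hx mulrCA mulrA.
split.
- move=> /(_ 1 ltr01) [v hv].
  rewrite ltNge; apply/negP => hx1.
  pose i0 := Ordinal m0.
  case: (@arg_maxP _ R _ i0 predT (fun i => v i 0) isT) => i _ imax.
  have [vi0 [_ hi]] := hv i.
  move: hi; rewrite Av.
  have S0 : 0 <= \sum_j Pi i j * v j 0.
    apply: sumr_ge0 => j _; apply: mulr_ge0 => //.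
    by have [+ _] := hv j => /ltW.
  have Sle : \sum_j Pi i j * v j 0 <= v i 0.
    apply: (le_trans (y := \sum_j Pi i j * v i 0)).
      apply: ler_sum => j _; apply: ler_wpM2l => //; exact: imax.
    by rewrite -mulr_suml Psum mul1r.
  have : x * \sum_j Pi i j * v j 0 <= v i 0.
    apply: le_trans Sle; rewrite -{2}[\sum_j _]mul1r; exact: ler_wpM2r.
  by move=> h1 h2; move: (le_lt_trans h1 h2); rewrite ltxx.
- move=> x1 eps e0.
  exists (const_mx (eps / 2)) => i.
  have e2 : 0 < eps / 2 by rewrite divr_gt0.
  split; first by rewrite mxE.
  split; first by rewrite mxE ltr_pdivrMr // ltr_pMr // ltr1n.
  rewrite Av.
  under eq_bigr do rewrite mxE.
  by rewrite -mulr_suml Psum mul1r mxE ltr_pMl.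
Qed.
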